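(* Let $(\mathcal{H},\langle\cdot,\cdot\rangle)$ be a real Hilbert space with induced norm $\|\cdot\|$. Let $f:\mathcal{H}\to\mathbb{R}$ be $\mu$-strongly convex and $L$-smooth with $0<\mu<L<+\infty$, and let $g:\mathcal{H}\to\mathbb{R}\cup\{+\infty\}$ be convex, proper and lower semicontinuous. Let $q=\mu/L$ and let $((x^k,y^k,z^k,A_k))_{k\in\mathbb{N}_0}$ be generated by the Prox-ITEM method (described in the context) from an arbitrary $x^0\in\mathcal{H}$. Let $x^\star$ be the unique minimizer of $f+g$ over $\mathcal{H}$. Then for every $k\in\mathbb{N}_0$, $$\|z^k-x^\star\|^2\le \frac{1}{1+qA_k}\,\|x^0-x^\star\|^2.$$
   Context: $f$ is $L$-smooth if it is Fréchet differentiable with $L$-Lipschitz gradient; $\mu$-strongly convex means $f-\frac{\mu}{2}\|\cdot\|^2$ is convex. For $\gamma>0$, $\operatorname{Prox}^{\gamma}_g(x)=\operatorname{argmin}_{z\in\mathcal{H}}\big(g(z)+\frac{1}{2\gamma}\|x-z\|^2\big)$. The Prox-ITEM method: set $q=\mu/L$, $A_0=0$, $z^0=x^0$, and for $k=0,1,2,\dots$: $A_{k+1}=\frac{(1+q)A_k+2\big(1+\sqrt{(1+A_k)(1+qA_k)}\big)}{(1-q)^2}$, $\beta_k=\frac{A_k}{(1-q)A_{k+1}}$, $\delta_k=\sqrt{\frac{A_{k+1}}{1+qA_{k+1}}}$, $y^k=(1-\beta_k)z^k+\beta_k x^k$, $\bar z^{k+1}=(1-q\delta_k)z^k+q\delta_k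 y^k-\frac{\delta_k}{L}\nabla f(y^k)$, $z^{k+1}=\operatorname{Prox}^{\delta_k/L}_g(\bar z^{k+1})$, $x^{k+1}=y^k-\frac1L\nabla f(y^k)-\frac{1}{\delta_k}(\bar z^{k+1}-z^{k+1})$. *)

(* Defs.v *)
From mathcomp Require Import all_boot all_order all_algebra.
From mathcomp Require Import boolp reals constructive_ereal.
Set Implicit Arguments. Unset Strict Implicit. Unset Printing Implicit Defensive.
Import Order.TTheory GRing.Theory Num.Theory.
Local Open Scope ring_scope.

Section Hilbert.
Variables (R : realType) (V : lmodType R) (ip : V -> V -> R).

Definition hnorm (x : V) : R := Num.sqrt (ip x x).

Definition is_hilbert : Prop :=
  [/\ (forall x y, ip x y = ip y x),
      (forall a x y w, ip (a *: x + y) w = a * ip x w + ip y w),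
      (forall x, 0 <= ip x x),
      (forall x, ip x x = 0 -> x = 0) &
      (forall u : nat -> V,
         (forall e : R, 0 < e -> exists N, forall m n, (N <= m)%N -> (N <= n)%N ->
              hnorm (u m - u n) < e) ->
         exists l, forall e : R, 0 < e -> exists N, forall n, (N <= n)%N ->
              hnorm (u n - l) < e)].

Definition convex_fun (h : V -> R) : Prop :=
  forall x y (t : R), 0 <= t <= 1 ->
    h (t *: x + (1 - t) *: y) <= t * h x + (1 - t) * h y.

Definition strongly_convex (mu : R) (h : V -> R) : Prop :=
  convex_fun (fun x => h x - mu / 2 * hnorm x ^+ 2).

Definition is_gradient (h : V -> R) (gf : V -> V) : Prop :=
  forall x (e : R), 0 < e -> exists d : R, 0 < d /\
    forall y, hnorm (y - x) < d ->
      `| h y - h x - ip (gf x) (y - x) | <= e * hnorm (y - x).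

Definition L_smooth (L : R) (h : V -> R) (gf : V -> V) : Prop :=
  is_gradient h gf /\ forall x y, hnorm (gf x - gf y) <= L * hnorm (x - y).

Local Open Scope ereal_scope.

(* g : V -> R U {+oo} : never -oo *)
Definition no_minfty (g : V -> \bar R) : Prop := forall x, g x != -oo.

Definition proper_fun (g : V -> \bar R) : Prop :=
  no_minfty g /\ exists x, g x != +oo.

Definition econvex_fun (g : V -> \bar R) : Prop :=
  forall x y : V, forall t : R, (0 < t < 1)%R ->
    g (t *: x + (1 - t) *: y)%R <= t%:E * g x + (1 - t)%:E * g y.

Definition lsc_fun (g : V -> \bar R) : Prop :=
  forall x (a : R), a%:E < g x -> exists d : R, (0 < d)%R /\
    forall y, (hnorm (y - x) < d)%R -> a%:E < g y.

Definition is_prox (g : V -> \bar R) (gamma : R) (x p : V) : Prop :=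
  forall w, g p + (hnorm (x - p) ^+ 2 / (2 * gamma))%R%:E
            <= g w + (hnorm (x - w) ^+ 2 / (2 * gamma))%R%:E.

Definition is_minimizer (f : V -> R) (g : V -> \bar R) (xs : V) : Prop :=
  forall w, (f xs)%:E + g xs <= (f w)%:E + g w.

End Hilbert.

Section Coefs.
Variable R : realType.
Definition A_next (q a : R) : R :=
  ((1 + q) * a + 2 * (1 + Num.sqrt ((1 + a) * (1 + q * a)))) / (1 - q) ^+ 2.
Definition beta_coef (q a a' : R) : R := a / ((1 - q) * a').
Definition delta_coef (q a' : R) : R := Num.sqrt (a' / (1 + q * a')).
End Coefs.

(* Main.v *)
Require Import Defs.
From mathcomp Require Import all_boot all_order all_algebra.
From mathcomp Require Import boolp reals constructive_ereal.
From mathcomp Require Import ring lra.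
Import Order.TTheory GRing.Theory Num.Theory.
Set Implicit Arguments. Unset Strict Implicit. Unset Printing Implicit Defensive.
Local Open Scope ring_scope.

Lemma le_small (R : realType) (a b c : R) :
  (forall t : R, 0 < t -> t < 1 -> a <= b + t * c) -> a <= b.
Proof.
move=> H; apply/ler_addgt0Pr => e he.
have hc := normr_ge0 c.
have hec : 0 < e + e + `|c| by lra.
set t := e / (e + e + `|c|).
have ht0 : 0 < t by rewrite divr_gt0.
have ht1 : t < 1 by rewrite ltr_pdivrMr // mul1r; lra.
apply: le_trans (H t ht0 ht1) _; rewrite lerD2l.
apply: le_trans (_ : t * `|c| <= e).
  by apply: ler_wpM2l; [exact: ltW | exact: ler_norm].
rewrite /t mulrAC ler_pdivrMr //; nra.
Qed.

Lemma small_t (R : realType) (rho K c e : R) : 0 < rho -> 0 <= K -> 0 <= c -> 0 < e ->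
  exists t : R, [/\ 0 < t, t < 1, t * K < rho & t * c <= e].
Proof.
move=> hr hK hc he.
have hK1 : 0 < K + 1 by lra.
have hc1 : 0 < c + 1 by lra.
exists (Num.min (1/2) (Num.min (rho / (K + 1)) (e / (c + 1)))).
have h1 : Num.min (1/2) (Num.min (rho / (K + 1)) (e / (c + 1))) <= 1/2 by rewrite ge_min; apply/orP; left.
have h2 : Num.min (1/2) (Num.min (rho / (K + 1)) (e / (c + 1))) <= rho / (K + 1)
  by rewrite !ge_min; apply/orP; right; apply/orP; left.
have h3 : Num.min (1/2) (Num.min (rho / (K + 1)) (e / (c + 1))) <= e / (c + 1)
  by rewrite !ge_min; apply/orP; right; apply/orP; right.
set t := Num.min _ _ in h1 h2 h3 *.
have ht : 0 < t by rewrite !lt_min ?divr_gt0 //; lra.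
split => //; first by lra.
- rewrite ler_pdivlMr // in h2; nra.
- rewrite ler_pdivlMr // in h3; nra.
Qed.


Section IP.
Variables (R : realType) (V : lmodType R) (ip : V -> V -> R).
Hypothesis Hh : is_hilbert ip.

Lemma ipC x y : ip x y = ip y x.
Proof. by case: Hh. Qed.
Lemma ipL a x y w : ip (a *: x + y) w = a * ip x w + ip y w.
Proof. by case: Hh. Qed.
Lemma ip0l w : ip 0 w = 0.
Proof.
have := ipL 1 0 0 w; rewrite scaler0 addr0 mul1r => /eqP.
by rewrite -subr_eq subrr eq_sym => /eqP.
Qed.
Lemma ipDl x y w : ip (x + y) w = ip x w + ip y w.
Proof. by have := ipL 1 x y w; rewrite scale1r mul1r. Qed.
Lemma ipZl a x w : ip (a *: x) w = a * ip x w.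
Proof. by have := ipL a x 0 w; rewrite addr0 ip0l addr0. Qed.
Lemma ipNl x w : ip (- x) w = - ip x w.
Proof. by rewrite -scaleN1r ipZl mulN1r. Qed.
Lemma ipDr x y w : ip w (x + y) = ip w x + ip w y.
Proof. by rewrite ipC ipDl !(ipC w). Qed.
Lemma ipZr a x w : ip w (a *: x) = a * ip w x.
Proof. by rewrite ipC ipZl (ipC w). Qed.
Lemma ipNr x w : ip w (- x) = - ip w x.
Proof. by rewrite ipC ipNl (ipC w). Qed.
Lemma ip0r w : ip w 0 = 0.
Proof. by rewrite ipC ip0l. Qed.
Lemma ipge0 x : 0 <= ip x x.
Proof. by case: Hh. Qed.
Lemma ipdef x : ip x x = 0 -> x = 0.
Proof. by case: Hh => _ _ _ /(_ x). Qed.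
Lemma hnorm2 x : hnorm ip x ^+ 2 = ip x x.
Proof. by rewrite /hnorm sqr_sqrtr // ipge0. Qed.
Lemma hnorm_ge0 x : 0 <= hnorm ip x.
Proof. by rewrite /hnorm sqrtr_ge0. Qed.

Definition sip x y := (ip x y + ip y x) / 2.
Lemma ip_sip x y : ip x y = sip x y.
Proof. by rewrite /sip (ipC y x); field. Qed.

Lemma vec_eq u v : ip (u - v) (u - v) = 0 -> u = v.
Proof. by move/ipdef/subr0_eq. Qed.

Lemma CS a b : ip a b <= hnorm ip a * hnorm ip b.
Proof.
have key : ip a b ^+ 2 <= ip a a * ip b b.
  have [hb|hb] := eqVneq (ip b b) 0.
    by rewrite (ipdef hb) ip0r expr0n /= ip0r mulr0.
  have hbp : 0 < ip b b by rewrite lt_def hb ipge0.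
  have := ipge0 (a - (ip a b / ip b b) *: b).
  have -> : ip (a - (ip a b / ip b b) *: b) (a - (ip a b / ip b b) *: b)
     = (ip a a * ip b b - ip a b ^+ 2) / ip b b.
    rewrite !(ipDl, ipDr, ipNl, ipNr, ipZl, ipZr) (ipC b a). by field.
  by rewrite pmulr_lge0 ?invr_gt0 // subr_ge0.
have [hab|hab] := lerP (ip a b) 0.
  by apply: le_trans hab _; rewrite mulr_ge0 ?hnorm_ge0.
rewrite -(ger0_norm (ltW hab)) -sqrtr_sqr /hnorm -sqrtrM ?ipge0 //.
by rewrite ler_sqrt // mulr_ge0 ?ipge0.
Qed.


Lemma hnormZ a x : hnorm ip (a *: x) = `|a| * hnorm ip x.
Proof.
by rewrite /hnorm ipZl ipZr mulrA -expr2 sqrtrM ?sqr_ge0 // sqrtr_sqr.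
Qed.

Ltac ipexp := rewrite ?(ipDl, ipDr, ipNl, ipNr, ipZl, ipZr, ip0l, ip0r).
Ltac ipsym := rewrite ?ip_sip /sip.

Lemma vec_eq' u v : ip (u - v) (u - v) = 0 -> u = v.
Proof. exact: vec_eq. Qed.

Variables (f : V -> R) (gf : V -> V) (mu L : R).
Hypotheses (hmu : 0 < mu) (hmuL : mu < L) (hsc : strongly_convex ip mu f)
  (hsm : L_smooth ip L f gf).

Lemma F1 x d : f x + ip (gf x) d + mu / 2 * ip d d <= f (x + d).
Proof.
apply/ler_addgt0Pr => e he.
set nd := hnorm ip d.
have hnd : 0 <= nd by exact: hnorm_ge0.
have hnd1 : 0 < nd + 1 by lra.
have heps : 0 < e / 2 / (nd + 1) by rewrite !divr_gt0.
have [rho [hrho Hg]] := hsm.1 x _ heps.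
have hdd := ipge0 d.
have hmd : 0 <= mu * ip d d by rewrite mulr_ge0 // ltW.
have [t [ht0 ht1 htK htc]] := small_t hrho hnd hmd he.
have Hgt := Hg (x + t *: d).
have e1 : x + t *: d - x = t *: d by rewrite addrC addKr.
rewrite e1 hnormZ (ger0_norm (ltW ht0)) in Hgt.
have {}Hgt := Hgt htK.
move: Hgt; rewrite ler_norml => /andP [Hg1 _].
have ht01 : 0 <= t <= 1 by apply/andP; split; lra.
have Hc := hsc (x + d) x ht01.
have e2 : t *: (x + d) + (1 - t) *: x = x + t *: d.
  apply: vec_eq; ipexp; ipsym; ring.
rewrite /= e2 !hnorm2 in Hc.
move: Hc; ipexp => Hc.
rewrite ipZr -/nd in Hg1; rewrite (ipC d x) in Hc.
have k1 : t * (f x + ip (gf x) d + mu/2 * ip d d - f (x + d)) <=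
          t * (e/2/(nd+1) * nd + mu/2 * t * ip d d) by nra.
rewrite ler_pM2l // in k1.
have k2 : e/2/(nd+1) * nd <= e/2 by rewrite mulrAC ler_pdivrMr //; nra.
nra.
Qed.

Lemma F2 x d : f (x + d) <= f x + ip (gf x) d + L / 2 * ip d d.
Proof.
have hL : 0 < L := lt_trans hmu hmuL.
set nd := hnorm ip d.
have hdd := ipge0 d.
have hnd : 0 <= nd by exact: hnorm_ge0.
have hnd2 : nd ^+ 2 = ip d d by rewrite /nd hnorm2.
have part : forall n : nat, (0 < n)%N ->
    f (x + d) - f x - ip (gf x) d <= L * ip d d * (n%:R + 1) / (2 * n%:R).
  move=> n hn.
  have hnR : 0 < n%:R :> R by rewrite ltr0n.
  pose p (m : nat) := x + (m%:R / n%:R) *: d.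
  have ind : forall m : nat, f (p m) - f x - m%:R / n%:R * ip (gf x) d
      <= L * ip d d * (m%:R * (m%:R + 1)) / (2 * n%:R ^+ 2).
    elim=> [|m IH].
      have -> : p 0%N = x by rewrite /p mul0r scale0r addr0.
      by rewrite subrr !mul0r subr0 mulr0 mul0r.
    have hF := F1 (p m.+1) (- (1 / n%:R) *: d).
    have e1 : p m.+1 + - (1 / n%:R) *: d = p m.
      apply: vec_eq; rewrite /p -addn1 natrD; ipexp; ipsym; field.
      by rewrite gt_eqF.
    rewrite e1 in hF; move: hF; ipexp => hF.
    have hmd : 0 <= mu / 2 * (- (1 / n%:R) * (- (1 / n%:R) * ip d d)).
      have hmu2 : 0 <= mu / 2 by rewrite divr_ge0 // ltW.
      have h1n : 0 <= 1 / n%:R :> R by rewrite divr_ge0 // ler0n.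
      have := ipge0 d.
      by rewrite !mulNr mulrN opprK => ?; do 3? apply: mulr_ge0 => //.
    have hLip := hsm.2 (p m.+1) x.
    have e2 : p m.+1 - x = ((m.+1)%:R / n%:R) *: d by rewrite /p addrC addKr.
    rewrite e2 hnormZ ger0_norm ?divr_ge0 ?ler0n // -/nd in hLip.
    have hcs := CS (gf (p m.+1) - gf x) d.
    rewrite -/nd ipDl ipNl in hcs.
    have hcs2 : hnorm ip (gf (p m.+1) - gf x) * nd <= L * ((m.+1)%:R / n%:R * nd) * nd.
      by apply: ler_wpM2r.
    have hm : 0 <= m%:R :> R by rewrite ler0n.
    have hS : (m.+1)%:R = m%:R + 1 :> R by rewrite -addn1 natrD.
    rewrite hS in hcs2 *.
    rewrite -hnd2.
    rewrite -hnd2 in IH hF hmd.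
    have hinv : n%:R * (1 / n%:R) = 1 :> R by rewrite mul1r divff // gt_eqF.
    set a := f (p m.+1) in hF *.
    set b := f (p m) in hF IH.
    set gg := ip (gf (p m.+1)) d in hF hcs.
    set g0 := ip (gf x) d in IH hcs *.
    set hgn := hnorm ip (gf (p m.+1) - gf x) in hcs hcs2.
    set N := n%:R in hnR hinv IH hF hmd hcs2 *.
    set M := m%:R in hm IH hcs2 *.
    have hF' : a <= b + 1 / N * gg by rewrite mulNr in hF; lra.
    have hcs3 : gg <= g0 + L * ((M + 1) / N * nd) * nd by lra.
    have : a - f x - (M + 1) / N * g0 <= L * nd ^+ 2 * (M * (M + 1)) / (2 * N ^+ 2) + 1 / N * (L * ((M + 1) / N * nd) * nd).
      have : 1 / N * gg <= 1 / N * g0 + 1 / N * (L * ((M + 1) / N * nd) * nd).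
        rewrite -mulrDr ler_pM2l //; by rewrite divr_gt0.
      have : (M + 1) / N * g0 = M / N * g0 + 1 / N * g0 by rewrite -mulrDl -mulrDl.
      lra.
    move=> h; apply: (le_trans h); rewrite le_eqVlt; apply/orP; left; apply/eqP.
    field; by rewrite gt_eqF.
  have := ind n.
  have -> : p n = x + d by rewrite /p divff ?gt_eqF // scale1r.
  rewrite divff ?gt_eqF // mul1r.
  move=> h; apply: (le_trans h); rewrite le_eqVlt; apply/orP; left; apply/eqP.
  field; by rewrite gt_eqF.
apply/ler_addgt0Pr => e he.
have hb : 0 <= L * ip d d / (2 * e) by rewrite divr_ge0 ?mulr_ge0 // ltW // mulr_gt0.
have hB := archi_boundP hb.
set n := Num.Def.archi_bound _ in hB.
have hn : (0 < n.+1)%N by [].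
have := part _ hn.
have hN : 0 < n.+1%:R :> R by rewrite ltr0n.
have hN' : L * ip d d / (2 * e) < n.+1%:R by apply: lt_trans hB _; rewrite ltr_nat.
rewrite ltr_pdivrMr ?mulr_gt0 // in hN'.
move=> h.
have : L * ip d d * (n.+1%:R + 1) / (2 * n.+1%:R) = L / 2 * ip d d + L * ip d d / (2 * n.+1%:R).
  by field; rewrite gt_eqF.
move=> e3; rewrite e3 in h.
have h4 : L * ip d d / (2 * n.+1%:R) <= e.
  by rewrite ler_pdivrMr ?mulr_gt0 //; nra.
set T := L * ip d d / (2 * n.+1%:R) in h h4. set F := f (x + d) in h *. set G := ip (gf x) d in h *. lra.
Qed.

Definition hf u := f u - mu / 2 * ip u u.
Definition ghf u := gf u - mu *: u.

Lemma H1 x d : hf x + ip (ghf x) d <= hf (x + d).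
Proof.
have := F1 x d; rewrite /hf /ghf; ipexp; ipsym => ?; lra.
Qed.

Lemma H2 x d : hf (x + d) <= hf x + ip (ghf x) d + (L - mu) / 2 * ip d d.
Proof.
have := F2 x d; rewrite /hf /ghf; ipexp; ipsym => ?; lra.
Qed.

Lemma H3 u x : hf x + ip (ghf x) (u - x)
   + ip (ghf u - ghf x) (ghf u - ghf x) / (2 * (L - mu)) <= hf u.
Proof.
have hL : 0 < L - mu by rewrite subr_gt0.
set D := ghf u - ghf x.
set p := u + (- (L - mu)^-1) *: D.
have h1 := H1 x (p - x).
have e1 : x + (p - x) = p by rewrite addrC subrK.
rewrite e1 in h1.
have h2 := H2 u ((- (L - mu)^-1) *: D).
rewrite -/p in h2.
have e2 : ip (ghf x) (p - x) = ip (ghf x) (u - x) - (L - mu)^-1 * ip (ghf x) D.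
  rewrite /p; ipexp; ring.
rewrite e2 in h1.
rewrite !ipZr !ipZl in h2.
have e3 : ip (ghf u) D = ip D D + ip (ghf x) D by rewrite /D; ipexp; ring.
rewrite e3 in h2.
set dd := ip D D in h2 *.
set a := ip (ghf x) D in h1 h2.
have e4 : (L - mu) / 2 * (- (L - mu)^-1 * (- (L - mu)^-1 * dd)) = dd / (2 * (L - mu)).
  by field; rewrite gt_eqF.
rewrite e4 in h2.
have e5 : - (L - mu)^-1 * (dd + a) = - (dd / (L - mu)) - a / (L - mu) by field; rewrite gt_eqF.
rewrite e5 in h2.
have e6 : dd / (L - mu) = dd / (2 * (L - mu)) + dd / (2 * (L - mu)) by field; rewrite gt_eqF.
rewrite e6 in h2.
have e7 : (L - mu)^-1 * a = a / (L - mu) by rewrite mulrC.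
rewrite e7 in h1.
set t := dd / (2 * (L - mu)) in h2 *.
set t2 := a / (L - mu) in h1 h2.
lra.
Qed.

Section G.
Variable g : V -> \bar R.
Hypotheses (hpr : proper_fun g) (hcv : econvex_fun g).

Lemma fin_of w (r : R) : (g w <= r%:E)%E -> exists gw, g w = gw%:E.
Proof.
have := hpr.1 w.
case: (g w) => [x| |] //= _ h; first by exists x.
Qed.

Lemma fin_ex : exists w0 r0, g w0 = r0%:E.
Proof.
have [w0 hw0] := hpr.2.
have h1 := hpr.1 w0.
case E: (g w0) hw0 h1 => [x| |] //= _ _; by exists w0, x.
Qed.

Lemma prox_sub (gam : R) zb p : 0 < gam -> is_prox ip g gam zb p ->
  exists gp, g p = gp%:E /\
    forall w gw, g w = gw%:E -> gp + ip (gam^-1 *: (zb - p)) (w - p) <= gw.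
Proof.
move=> hg H.
have [w0 [r0 hr0]] := fin_ex.
have [gp hgp] : exists gp, g p = gp%:E.
  have := H w0; rewrite hr0 -EFinD.
  have := hpr.1 p.
  case: (g p) => [x| |] //= _; first by exists x.
exists gp; split => // w gw hgw.
apply: (@le_small _ _ _ (ip (w - p) (w - p) / (2 * gam))) => t ht0 ht1.
have ht : (0 < t < 1) by apply/andP.
have hc := hcv w p ht.
rewrite hgw hgp -!EFinM -EFinD in hc.
have [gpt hgpt] := fin_of hc.
rewrite hgpt lee_fin in hc.
have hp := H (t *: w + (1 - t) *: p).
rewrite hgp hgpt -!EFinD lee_fin !hnorm2 in hp.
have e1 : ip (zb - (t *: w + (1 - t) *: p)) (zb - (t *: w + (1 - t) *: p))
   = ip (zb - p) (zb - p) - 2 * t * ip (zb - p) (w - p) + t ^+ 2 * ip (w - p) (w - p).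
  ipexp; ipsym; ring.
rewrite e1 in hp.
rewrite ipZl.
set X := ip (zb - p) (w - p) in hp *.
set Y := ip (w - p) (w - p) in hp *.
set Z := ip (zb - p) (zb - p) in hp.
have e2 : (Z - 2 * t * X + t ^+ 2 * Y) / (2 * gam) = Z / (2 * gam) - t * (gam^-1 * X) + t * (t * (Y / (2 * gam))).
  by field; rewrite gt_eqF.
rewrite e2 in hp.
set X' := gam^-1 * X in hp *.
set Y' := Y / (2 * gam) in hp *.
have hY : 0 <= Y' by rewrite /Y' divr_ge0 ?ipge0 // mulr_ge0 // ltW.
rewrite -(ler_pM2l ht0).
have hs := lerD hp hc.
rewrite -subr_ge0.
have -> : t * (gw + t * Y') - t * (gp + X') =
  (gpt + (Z / (2 * gam) - t * X' + t * (t * Y')) + (t * gw + (1 - t) * gp))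
  - (gp + Z / (2 * gam) + gpt) by ring.
by rewrite subr_ge0.
Qed.
Lemma min_sub xs : is_minimizer f g xs ->
  exists gx, g xs = gx%:E /\
    forall w gw, g w = gw%:E -> gx + ip (- gf xs) (w - xs) <= gw.
Proof.
move=> H.
have [w0 [r0 hr0]] := fin_ex.
have [gx hgx] : exists gx, g xs = gx%:E.
  have := H w0; rewrite hr0 -EFinD.
  have := hpr.1 xs.
  case: (g xs) => [x| |] //= _; first by exists x.
exists gx; split => // w gw hgw.
apply: (@le_small _ _ _ (L / 2 * ip (w - xs) (w - xs))) => t ht0 ht1.
have ht : (0 < t < 1) by apply/andP.
have hc := hcv w xs ht.
rewrite hgw hgx -!EFinM -EFinD in hc.
have [gpt hgpt] := fin_of hc.
rewrite hgpt lee_fin in hc.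
have hp := H (t *: w + (1 - t) *: xs).
rewrite hgx hgpt -!EFinD lee_fin in hp.
have hd := F2 xs (t *: (w - xs)).
have e1 : xs + t *: (w - xs) = t *: w + (1 - t) *: xs.
  apply: vec_eq; ipexp; ipsym; ring.
rewrite e1 in hd.
rewrite !ipZr ipZl in hd.
rewrite ipNl.
set X := ip (gf xs) (w - xs) in hd *.
set Y := ip (w - xs) (w - xs) in hd *.
have hY : 0 <= L / 2 * Y by rewrite mulr_ge0 ?ipge0 // divr_ge0 // ltW // (lt_trans hmu hmuL).
rewrite -(ler_pM2l ht0).
lra.
Qed.

Lemma mono z1 s1 z2 s2 g1 g2 :
  g z1 = g1%:E -> g z2 = g2%:E ->
  (forall w gw, g w = gw%:E -> g1 + ip s1 (w - z1) <= gw) ->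
  (forall w gw, g w = gw%:E -> g2 + ip s2 (w - z2) <= gw) ->
  0 <= ip (s1 - s2) (z1 - z2).
Proof.
move=> h1 h2 H1 H2.
have := H1 _ _ h2; have := H2 _ _ h1; ipexp => a b; lra.
Qed.

Lemma cyc3 z1 s1 z2 s2 z3 s3 g1 g2 g3 :
  g z1 = g1%:E -> g z2 = g2%:E -> g z3 = g3%:E ->
  (forall w gw, g w = gw%:E -> g1 + ip s1 (w - z1) <= gw) ->
  (forall w gw, g w = gw%:E -> g2 + ip s2 (w - z2) <= gw) ->
  (forall w gw, g w = gw%:E -> g3 + ip s3 (w - z3) <= gw) ->
  0 <= ip s3 (z3 - z1) - ip s2 (z3 - z2) - ip s1 (z2 - z1).
Proof.
move=> h1 h2 h3 H1 H2 H3.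
have := H1 _ _ h2; have := H2 _ _ h3; have := H3 _ _ h1; ipexp => a b c; lra.
Qed.

End G.

End IP.

Section Step.
Variables (R : realType) (V : lmodType R) (ip : V -> V -> R).
Hypothesis Hh : is_hilbert ip.
Ltac ipexp := rewrite ?(ipDl Hh, ipDr Hh, ipNl Hh, ipNr Hh, ipZl Hh, ipZr Hh, ip0l Hh, ip0r Hh).
Ltac ipsym := rewrite ?(ip_sip Hh) /sip.

Variables (mu L : R).
Hypotheses (hmu : 0 < mu) (hmuL : mu < L).

Definition Phi A Z S eta Ho :=
  (1 + mu / L * A) * ip Z Z + (1 - mu / L) * A *
   ((eta - ip Ho Ho / (2 * (L - mu))) / L + (mu / L) / (1 - mu / L) * ip Z S / L
    + 1 / (2 * (1 - mu / L)) * ip S S / L ^+ 2).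

Lemma step_id (q d A A' : R) Z Yo Ho S H S' eo en :
  q = mu / L -> 0 < d -> 0 < 1 - q * d ^+ 2 ->
  A' = d ^+ 2 / (1 - q * d ^+ 2) ->
  A = d * ((1 + q) * d - 2) / (1 - q * d ^+ 2) ->
  let X := (1 - q) *: Yo - L^-1 *: (Ho + S) in
  let Y := (1 - A / ((1 - q) * A')) *: Z + (A / ((1 - q) * A')) *: X in
  let Z' := (1 - q * d) *: Z - (d / L) *: (H + S') in
  Phi A Z S eo Ho - Phi A' Z' S' en H =
  (1 - q) * (A * (eo - en - ip H (Yo - Y) - ip (Ho - H) (Ho - H) / (2 * (L - mu))) / L
   + (A' - A) * (- en + ip H Y - ip H H / (2 * (L - mu))) / L
   + (d * (A' - A) - A) / (d * (1 - q)) * ip S' Z' / L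
   + A / (d * (1 - q)) * (ip S' Z' - ip S (Z' - Z)) / L
   + 1 / (2 * (1 - q)) * (A * ip (S - S') (S - S') + (A' - A) * ip S' S') / L ^+ 2).
Proof.
move=> hq hd hqd hA' hA X Y Z'.
have hL : 0 < L := lt_trans hmu hmuL.
have hmuq : mu = q * L by rewrite hq divfK // gt_eqF.
have hq1 : q < 1 by rewrite hq ltr_pdivrMr // mul1r.
rewrite /Phi /Z' /Y /X -hq hmuq.
ipexp; ipsym.
have h1q : 0 < 1 - q by rewrite subr_gt0.
have hLq : 0 < L - q * L by rewrite -{1}(mul1r L) -mulrBl mulr_gt0.
rewrite hA' hA.
field.
by rewrite !gt_eqF.
Qed.

Lemma step_le (q d A A' : R) Z Yo Ho S H S' eo en :
  q = mu / L -> 0 < d -> 0 < 1 - q * d ^+ 2 ->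
  A' = d ^+ 2 / (1 - q * d ^+ 2) ->
  A = d * ((1 + q) * d - 2) / (1 - q * d ^+ 2) ->
  0 <= A -> A <= A' -> 0 <= d * (A' - A) - A ->
  let X := (1 - q) *: Yo - L^-1 *: (Ho + S) in
  let Y := (1 - A / ((1 - q) * A')) *: Z + (A / ((1 - q) * A')) *: X in
  let Z' := (1 - q * d) *: Z - (d / L) *: (H + S') in
  0 <= A * (eo - en - ip H (Yo - Y) - ip (Ho - H) (Ho - H) / (2 * (L - mu))) ->
  0 <= - en + ip H Y - ip H H / (2 * (L - mu)) ->
  0 <= ip S' Z' ->
  0 <= ip S' Z' - ip S (Z' - Z) ->
  Phi A' Z' S' en H <= Phi A Z S eo Ho.
Proof.
move=> hq hd hqd hA' hA hA0 hAA hc2 X Y Z' ha hb hg2 hg4.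
have hL : 0 < L := lt_trans hmu hmuL.
have hq1 : q < 1 by rewrite hq ltr_pdivrMr // mul1r.
have h1q : 0 < 1 - q by rewrite subr_gt0.
rewrite -subr_ge0 (@step_id q d A A' Z Yo Ho S H S' eo en hq hd hqd hA' hA) -/X -/Y -/Z'.
apply: mulr_ge0; first exact: ltW.
have hdq : 0 < d * (1 - q) by rewrite mulr_gt0.
repeat apply: addr_ge0.
- by apply: divr_ge0 => //; exact: ltW.
- apply: divr_ge0; last exact: ltW.
  by apply: mulr_ge0 => //; rewrite subr_ge0.
- apply: divr_ge0; last exact: ltW.
  by apply: mulr_ge0 => //; apply: divr_ge0 => //; exact: ltW.
- apply: divr_ge0; last exact: ltW.
  by apply: mulr_ge0 => //; apply: divr_ge0 => //; exact: ltW.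
- apply: divr_ge0; last by rewrite exprn_ge0 // ltW.
  apply: mulr_ge0; first by rewrite divr_ge0 // mulr_ge0 // ltW.
  apply: addr_ge0; apply: mulr_ge0; rewrite ?subr_ge0 ?(ipge0 Hh) //.
Qed.

Lemma Aprops (q A : R) : 0 < q -> q < 1 -> 0 <= A ->
  let A' := A_next q A in let d := delta_coef q A' in
  [/\ 0 < d, 0 < 1 - q * d ^+ 2, A' = d ^+ 2 / (1 - q * d ^+ 2),
      A = d * ((1 + q) * d - 2) / (1 - q * d ^+ 2) &
      A <= A' /\ 0 <= d * (A' - A) - A].
Proof.
move=> hq0 hq1 hA A' d.
have h1q : 0 < 1 - q by rewrite subr_gt0.
set r := Num.sqrt ((1 + A) * (1 + q * A)).
have hr0 : 0 <= r by exact: sqrtr_ge0.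
have hr2 : r ^+ 2 = (1 + A) * (1 + q * A) by rewrite sqr_sqrtr // mulr_ge0 //; nra.
have eA' : (1 - q) ^+ 2 * A' = (1 + q) * A + 2 + 2 * r.
  rewrite /A' /A_next -/r; field; by rewrite ?expf_neq0 ?gt_eqF.
have hq2 : 0 < (1 - q) ^+ 2 by rewrite exprn_gt0.
have hA'0 : 0 < A'.
  have h : 0 < (1 - q) ^+ 2 * A' by rewrite eA'; nra.
  by rewrite pmulr_rgt0 in h.
have hAA : A <= A'.
  have h : 0 <= (1 - q) ^+ 2 * (A' - A) by rewrite mulrBr eA'; nra.
  by rewrite pmulr_rge0 // subr_ge0 in h.
have hQ : (1 - q) ^+ 2 * A' ^+ 2 - 2 * ((1 + q) * A + 2) * A' + A ^+ 2 = 0.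
  have : (1 - q) ^+ 2 * ((1 - q) ^+ 2 * A' ^+ 2 - 2 * ((1 + q) * A + 2) * A' + A ^+ 2)
     = ((1 - q) ^+ 2 * A' - (1 + q) * A - 2) ^+ 2 - 4 * ((1 + A) * (1 + q * A)) by ring.
  rewrite eA' -hr2.
  have -> : ((1 + q) * A + 2 + 2 * r - (1 + q) * A - 2) ^+ 2 - 4 * r ^+ 2 = 0 by ring.
  move/eqP; rewrite mulf_eq0 expf_eq0 /= (gt_eqF h1q) /= => /eqP //.
have hqA : 0 < 1 + q * A' by nra.
have hd2 : d ^+ 2 = A' / (1 + q * A') by rewrite /d /delta_coef sqr_sqrtr // divr_ge0 // ltW.
have hden : 0 < (1 + q) * A' - A by nra.
have hdv : d = 2 * A' / ((1 + q) * A' - A).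
  rewrite /d /delta_coef.
  have -> : A' / (1 + q * A') = (2 * A' / ((1 + q) * A' - A)) ^+ 2.
    have : ((1 + q) * A' - A) ^+ 2 - 4 * A' * (1 + q * A') = (1 - q) ^+ 2 * A' ^+ 2 - 2 * ((1 + q) * A + 2) * A' + A ^+ 2 by ring.
    rewrite hQ => /eqP; rewrite subr_eq0 => /eqP h.
    rewrite expr_div_n h; field; by rewrite ?gt_eqF.
  rewrite sqrtr_sqr ger0_norm //; apply: divr_ge0; [apply: mulr_ge0 => //; exact: ltW | exact: ltW].
have hd : 0 < d by rewrite hdv divr_gt0 // mulr_gt0.
have hqd : 1 - q * d ^+ 2 = 1 / (1 + q * A').
  by rewrite hd2; field; rewrite gt_eqF.
have hqd0 : 0 < 1 - q * d ^+ 2 by rewrite hqd divr_gt0.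
have eA'd : A' = d ^+ 2 / (1 - q * d ^+ 2).
  by rewrite hqd hd2; field; rewrite gt_eqF.
split => //.
- have hrel : d * ((1 + q) * A' - A) = 2 * A'.
    by rewrite hdv; field; rewrite gt_eqF.
  have : A = (1 + q) * A' - 2 * A' / d by rewrite -hrel; field; rewrite gt_eqF.
  move=> ->; rewrite eA'd; field.
  by rewrite !gt_eqF.
split => //.
rewrite hdv.
  have -> : 2 * A' / ((1 + q) * A' - A) * (A' - A) - A
    = (2 * A' ^+ 2 - (3 + q) * A * A' + A ^+ 2) / ((1 + q) * A' - A).
    by field; rewrite gt_eqF.
  apply: divr_ge0; last exact: ltW.
  have e : (1 - q) ^+ 2 * (2 * A' ^+ 2 - (3 + q) * A * A' + A ^+ 2)
      = (1 + 9 * q - q ^+ 2 - q ^+ 3) * A * A' + 8 * A' - (1 + 2 * q - q ^+ 2) * A ^+ 2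
        + 2 * ((1 - q) ^+ 2 * A' ^+ 2 - 2 * ((1 + q) * A + 2) * A' + A ^+ 2) by ring.
  rewrite hQ mulr0 addr0 in e.
  have h2 : 0 <= (1 + 9 * q - q ^+ 2 - q ^+ 3) * A * A' + 8 * A' - (1 + 2 * q - q ^+ 2) * A ^+ 2.
    have h3 : 0 <= 1 + 9 * q - q ^+ 2 - q ^+ 3 by nra.
    have h4 : (1 + 9 * q - q ^+ 2 - q ^+ 3) * A * A <= (1 + 9 * q - q ^+ 2 - q ^+ 3) * A * A'.
      by apply: ler_wpM2l => //; apply: mulr_ge0.
    have h5 : 0 <= 7 * q - q ^+ 3.
      have hqq : q * q <= 1 by nra.
      have : q ^+ 3 <= q.
        by rewrite exprS expr2; have := ler_wpM2l (ltW hq0) hqq; rewrite mulr1.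
      lra.
    have h6 : 0 <= (7 * q - q ^+ 3) * A ^+ 2 by rewrite mulr_ge0 // sqr_ge0.
    have -> : (1 + 9 * q - q ^+ 2 - q ^+ 3) * A * A' + 8 * A' - (1 + 2 * q - q ^+ 2) * A ^+ 2
      = ((1 + 9 * q - q ^+ 2 - q ^+ 3) * A * A' - (1 + 9 * q - q ^+ 2 - q ^+ 3) * A * A)
        + (7 * q - q ^+ 3) * A ^+ 2 + 8 * A' by ring.
    rewrite -subr_ge0 in h4.
    by apply: addr_ge0; [exact: addr_ge0 | apply: mulr_ge0 => //; exact: ltW].
  rewrite -e in h2.
  by rewrite (pmulr_rge0 _ (exprn_gt0 2 h1q)) in h2.
Qed.
End Step.

Section Fin.
Variables (R : realType) (V : lmodType R) (ip : V -> V -> R).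
Hypothesis Hh : is_hilbert ip.
Ltac ipexp := rewrite ?(ipDl Hh, ipDr Hh, ipNl Hh, ipNr Hh, ipZl Hh, ipZr Hh, ip0l Hh, ip0r Hh).
Ltac ipsym := rewrite ?(ip_sip Hh) /sip.
Variables (mu L : R).
Hypotheses (hmu : 0 < mu) (hmuL : mu < L).

Lemma step_le2 (q d A A' : R) Z X Y Z' Yo Ho S H S' eo en :
  q = mu / L -> 0 < d -> 0 < 1 - q * d ^+ 2 ->
  A' = d ^+ 2 / (1 - q * d ^+ 2) ->
  A = d * ((1 + q) * d - 2) / (1 - q * d ^+ 2) ->
  0 <= A -> A <= A' -> 0 <= d * (A' - A) - A ->
  X = (1 - q) *: Yo - L^-1 *: (Ho + S) ->
  Y = (1 - A / ((1 - q) * A')) *: Z + (A / ((1 - q) * A')) *: X ->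
  Z' = (1 - q * d) *: Z - (d / L) *: (H + S') ->
  0 <= A * (eo - en - ip H (Yo - Y) - ip (Ho - H) (Ho - H) / (2 * (L - mu))) ->
  0 <= - en + ip H Y - ip H H / (2 * (L - mu)) ->
  0 <= ip S' Z' ->
  0 <= ip S' Z' - ip S (Z' - Z) ->
  Phi ip mu L A' Z' S' en H <= Phi ip mu L A Z S eo Ho.
Proof.
move=> hq hd hqd hA' hA hA0 hAA hc2 hX hY hZ'.
rewrite hY hX hZ'.
exact: (step_le Hh hmu hmuL hq hd hqd hA' hA hA0 hAA hc2).
Qed.

Lemma phi_lb A Z S eta Ho : 0 <= A -> 0 <= eta - ip Ho Ho / (2 * (L - mu)) ->
  0 <= ip Z S -> (1 + mu / L * A) * ip Z Z <= Phi ip mu L A Z S eta Ho.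
Proof.
move=> hA he hZS.
have hL : 0 < L := lt_trans hmu hmuL.
have hq1 : mu / L < 1 by rewrite ltr_pdivrMr // mul1r.
have h1q : 0 < 1 - mu / L by rewrite subr_gt0.
rewrite /Phi lerDl.
apply: mulr_ge0; first by apply: mulr_ge0 => //; exact: ltW.
apply: addr_ge0; first apply: addr_ge0.
- by apply: divr_ge0 => //; exact: ltW.
- apply: divr_ge0; last exact: ltW.
  apply: mulr_ge0 => //; apply: divr_ge0; [apply: divr_ge0|]; exact: ltW.
- apply: divr_ge0; last by rewrite exprn_ge0 // ltW.
  apply: mulr_ge0; [apply: divr_ge0 => //; rewrite mulr_ge0 // ltW // | exact: ipge0].
Qed.
End Fin.

Ltac ipexpH H := rewrite ?(ipDl H, ipDr H, ipNl H, ipNr H, ipZl H, ipZr H, ip0l H, ip0r H).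
Ltac ipsymH H := rewrite ?(ip_sip H) /sip.

Theorem theorem1 (R : realType) (V : lmodType R) (ip : V -> V -> R)
  (f : V -> R) (gf : V -> V) (g : V -> \bar R) (mu L : R)
  (A : nat -> R) (x y z zbar : nat -> V) (xs : V) :
  is_hilbert ip ->
  0 < mu -> mu < L ->
  strongly_convex ip mu f ->
  L_smooth ip L f gf ->
  proper_fun g -> econvex_fun g -> lsc_fun ip g ->
  let q := mu / L in
  A 0%N = 0 ->
  z 0%N = x 0%N ->
  (forall k, A k.+1 = A_next q (A k)) ->
  (forall k, y k = (1 - beta_coef q (A k) (A k.+1)) *: z k
                   + beta_coef q (A k) (A k.+1) *: x k) ->
  (forall k, let dk := delta_coef q (A k.+1) in
     zbar k.+1 = (1 - q * dk) *: z k + (q * dk) *: y k - (dk / L) *: gf (y k)) ->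
  (forall k, is_prox ip g (delta_coef q (A k.+1) / L) (zbar k.+1) (z k.+1)) ->
  (forall k, x k.+1 = y k - L^-1 *: gf (y k)
                      - (delta_coef q (A k.+1))^-1 *: (zbar k.+1 - z k.+1)) ->
  is_minimizer f g xs ->
  forall k, hnorm ip (z k - xs) ^+ 2 <= (1 + q * A k)^-1 * hnorm ip (x 0%N - xs) ^+ 2.
Proof.
move=> Hh hmu hmuL hsc hsm hpr hcv _ q hA0 hz0 hA hy hzb hprox hx hmin.
have hqdef : q = mu / L by [].
clearbody q.
have hL : 0 < L := lt_trans hmu hmuL.
have hq0 : 0 < q by rewrite hqdef divr_gt0.
have hq1 : q < 1 by rewrite hqdef ltr_pdivrMr // mul1r.
have h1q : 0 < 1 - q by rewrite subr_gt0.
have hLm : 0 < L - mu by rewrite subr_gt0.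
have hAge : forall k, 0 <= A k.
  elim=> [|k IH]; first by rewrite hA0.
  have [_ _ _ _ [hAA _]] := Aprops hq0 hq1 IH.
  by rewrite hA; apply: le_trans hAA.
have [gx [hgx Hsx]] := min_sub Hh hmu hmuL hsc hsm hpr hcv hmin.
pose s k := (delta_coef q (A k.+1) / L)^-1 *: (zbar k.+1 - z k.+1).
have Hs : forall k, exists gp, g (z k.+1) = gp%:E /\
    forall w gw, g w = gw%:E -> gp + ip (s k) (w - z k.+1) <= gw.
  move=> k.
  have hd : 0 < delta_coef q (A k.+1) by have [] := Aprops hq0 hq1 (hAge k); rewrite -hA.
  exact: (prox_sub Hh hpr hcv (divr_gt0 hd hL) (hprox k)).
pose Sv k := if k is k'.+1 then s k' + gf xs else 0.
pose Yo k := if k is k'.+1 then y k' - xs else (1 - q)^-1 *: (x 0%N - xs).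
pose Ho k := if k is k'.+1 then ghf gf mu (y k') - ghf gf mu xs else 0.
pose eo k := if k is k'.+1 then hf ip f mu (y k') - hf ip f mu xs
                   - ip (ghf gf mu xs) (y k' - xs) else 0.
pose P k := Phi ip mu L (A k) (z k - xs) (Sv k) (eo k) (Ho k).
have hP0 : P 0%N = ip (x 0%N - xs) (x 0%N - xs).
  by rewrite /P /Phi hA0 hz0 !mulr0 !mul0r !addr0 mul1r.
have hlb : forall k, (1 + q * A k) * ip (z k - xs) (z k - xs) <= P k.
  move=> k; rewrite hqdef; case: k => [|k].
    rewrite /P /Sv /eo /Ho /=.
    apply: (phi_lb Hh hmu hmuL (hAge 0%N)); first by rewrite (ip0l Hh) mul0r subrr.
    by rewrite (ip0r Hh).
  apply: (phi_lb Hh hmu hmuL (hAge k.+1)).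
    have h3 := H3 Hh hmu hmuL hsc hsm (y k) xs.
    rewrite /eo /Ho; lra.
  have [gp [hgp Hp]] := Hs k.
  have := mono Hh hgp hgx Hp Hsx.
  by rewrite opprK (ipC Hh).
have hdpos : forall k, 0 < delta_coef q (A k.+1).
  by move=> k; have [] := Aprops hq0 hq1 (hAge k); rewrite -hA.
have eX : forall k, x k - xs = (1 - q) *: Yo k - L^-1 *: (Ho k + Sv k).
  case=> [|k] /=.
    by rewrite addr0 scaler0 subr0 scalerA mulfV ?gt_eqF // scale1r.
  have hd := hdpos k; rewrite hqdef in hd.
  rewrite hx; apply: (vec_eq Hh); rewrite /s /ghf hqdef; ipexpH Hh; ipsymH Hh.
  field; by rewrite ?gt_eqF.
have hgap : forall k, 0 <= A k * (eo k - eo k.+1 - ip (Ho k.+1) (Yo k - (y k - xs))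
     - ip (Ho k - Ho k.+1) (Ho k - Ho k.+1) / (2 * (L - mu))).
  case=> [|k] /=.
    by rewrite hA0 mul0r.
  apply: mulr_ge0; first exact: hAge.
  have h3 := H3 Hh hmu hmuL hsc hsm (y k) (y k.+1).
  move: h3; rewrite /ghf; ipexpH Hh; ipsymH Hh => h3; lra.
have hcyc : forall k, 0 <= ip (Sv k.+1) (z k.+1 - xs) - ip (Sv k) (z k.+1 - xs - (z k - xs)).
  case=> [|k] /=.
    have [gp [hgp Hp]] := Hs 0%N.
    by have := mono Hh hgp hgx Hp Hsx; rewrite opprK (ip0l Hh) subr0.
  have [gp0 [hgp0 Hp0]] := Hs k.
  have [gp [hgp Hp]] := Hs k.+1.
  have := cyc3 Hh hgx hgp0 hgp Hsx Hp0 Hp.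
  ipexpH Hh; ipsymH Hh => h; lra.
have hstep : forall k, P k.+1 <= P k.
  move=> k.
  have [hd hqd hA'e hAe [hAA hc2]] := Aprops hq0 hq1 (hAge k).
  rewrite -hA in hd hqd hA'e hAe hAA hc2.
  have hzk := hzb k; rewrite /= in hzk.
  set d := delta_coef q (A k.+1) in hd hqd hA'e hAe hAA hc2 hzk.
  have hdd : delta_coef q (A k.+1) = d by [].
  clearbody d.
  have [gp [hgp Hp]] := Hs k.
  have hg2 : 0 <= ip (Sv k.+1) (z k.+1 - xs).
    by have := mono Hh hgp hgx Hp Hsx; rewrite opprK.
  apply: (@step_le2 R V ip Hh mu L hmu hmuL q d (A k) (A k.+1) (z k - xs) (x k - xs)
     (y k - xs) (z k.+1 - xs) (Yo k) (Ho k) (Sv k) (Ho k.+1) (Sv k.+1) (eo k) (eo k.+1))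
     => //.
  - rewrite hy /beta_coef; apply: (vec_eq Hh); ipexpH Hh; ipsymH Hh; ring.
  - apply: (vec_eq Hh); rewrite /= /s /ghf hdd hzk hqdef; ipexpH Hh; ipsymH Hh.
    field; by rewrite ?gt_eqF.
  - have h3 := H3 Hh hmu hmuL hsc hsm xs (y k).
    move: h3; rewrite /= /ghf; ipexpH Hh; ipsymH Hh => h3; lra.
move=> k.
have hPk : P k <= P 0%N.
  elim: k => [|k IH]; first by [].
  exact: le_trans (hstep k) IH.
have hqA : 0 < 1 + q * A k by rewrite ltr_wpDr // mulr_ge0 // ltW.
rewrite !(hnorm2 Hh) ler_pdivlMl // -hP0.
exact: le_trans (hlb k) hPk.
Qed.
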